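(* Let $G$ be a chordal graph, $X\subsetneq V(G)$ a clique, and $L_1,\dots,L_t$ the evaporation sequence of $G$ with exception set $X$. Let $C=V(G)\setminus X$. If $G\setminus X$ is connected, then $N(C)=N(L_t)\cap X$.
   Context: A vertex is simplicial if its neighborhood is a clique. For a chordal graph $G$ and a clique $X\subseteq V(G)$ (possibly empty), the evaporation sequence of $G$ with exception set $X$ is defined recursively: if $X=V(G)$ it is the empty sequence; otherwise let $L_1$ be the set of simplicial vertices of $G$ that are not in $X$ (this set is always nonempty), and the evaporation sequence is $L_1$ followed by the evaporation sequence of $G-L_1$ with exception set $X$. For $S\subseteq V(G)$, $N(S)$ denotes the set of vertices not in $S$ that are adjacent to some vertex of $S$. *)

(* Defs.v *)
(* A simple graph is a symmetric irreflexive relation e on a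
   finite type T; its vertex set V(G) is the whole of T. *)
From mathcomp Require Import all_boot.
Set Implicit Arguments. Unset Strict Implicit. Unset Printing Implicit Defensive.

Section Graphs.
Variables (T : finType) (e : rel T).

Definition simple_graph : Prop := symmetric e /\ irreflexive e.

Definition is_clique (X : {set T}) : Prop :=
  forall x y, x \in X -> y \in X -> x != y -> e x y.

(* Chordal: every cycle of length at least 4 (given as the sequence of its
   distinct vertices x :: s, consecutive ones adjacent, last adjacent to x)
   has a chord, i.e. an edge between two non-consecutive vertices. *)
Definition chordal : Prop :=
  forall (x : T) (s : seq T), uniq (x :: s) -> 3 <= size s -> cycle e (x :: s) ->
    exists i j, [/\ i < j, j <= size s, i.+1 != j,
                    ~~ ((i == 0) && (j == size s)) &
                    e (nth x (x :: s) i) (nth x (x :: s) j)].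

Definition simplicial_in (S : {set T}) (v : T) : bool :=
  (v \in S) && [forall x, forall y,
     [&& x \in S, y \in S, e v x, e v y & x != y] ==> e x y].

Definition evap_layer (X S : {set T}) : {set T} :=
  [set v in S :\: X | simplicial_in S v].

Inductive is_evap (X : {set T}) : {set T} -> seq {set T} -> Prop :=
  | evap_done : is_evap X X [::]
  | evap_step S Ls : S != X -> is_evap X (S :\: evap_layer X S) Ls ->
                     is_evap X S (evap_layer X S :: Ls).

Definition nbhd (S : {set T}) : {set T} :=
  [set v | (v \notin S) && [exists u in S, e u v]].

Definition connected_in (C : {set T}) : Prop :=
  C != set0 /\
  forall x y, x \in C -> y \in C ->
    connect [rel a b | [&& e a b, a \in C & b \in C]] x y.
End Graphs.

(* Main.v *)
Require Import Defs.
From mathcomp Require Import all_boot.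
Set Implicit Arguments. Unset Strict Implicit.

Section Aux.
Variables (T : finType) (e : rel T).
Hypothesis esym : symmetric e.

Lemma simpl_edge S v x y : simplicial_in e S v -> x \in S -> y \in S ->
  e v x -> e v y -> x != y -> e x y.
Proof.
case/andP=> _ /forallP H xS yS vx vy xy.
by move: (H x) => /forallP /(_ y) /implyP; apply; rewrite xS yS vx vy xy.
Qed.

Lemma inL X S v : (v \in evap_layer e X S) = (v \in S :\: X) && simplicial_in e S v.
Proof. by rewrite inE. Qed.

Lemma memD2 (A B C : {set T}) x : (x \in A :\: B :\: C) = [&& x \notin C, x \notin B & x \in A].
Proof. by rewrite !in_setD. Qed.

Lemma skip X S p : forall a,
  path [rel u w | [&& e u w, u \in S :\: X & w \in S :\: X]] a p ->
  last a p \in S :\: evap_layer e X S :\: X ->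
  exists a', [/\ a' \in S :\: evap_layer e X S :\: X,
    connect [rel u w | [&& e u w, u \in S :\: evap_layer e X S :\: X &
                              w \in S :\: evap_layer e X S :\: X]] a' (last a p),
    (a \in evap_layer e X S -> e a a') & (a \notin evap_layer e X S -> a' = a)].
Proof.
set L := evap_layer e X S.
elim: p => [|y p IH] a /=.
  move=> _ H; have aL : a \notin L by move: H; rewrite memD2 => /and3P[_ ->].
  by exists a; split => //; rewrite (negbTE aL).
case/andP=> /and3P[eay aS yS] hp hl.
have [y' [y'S cy' Ly Ny]] := IH y hp hl.
have aSS : a \in S by move: aS; rewrite inE => /andP[].
have ySS : y \in S by move: yS; rewrite inE => /andP[].
have y'SS : y' \in S by move: y'S; rewrite memD2 => /and3P[].
have y'L : y' \notin L by move: y'S; rewrite memD2 => /and3P[_ + _].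
have y'X : y' \notin X by move: y'S; rewrite memD2 => /and3P[].
case: (boolP (a \in L)) => aL.
- case: (boolP (y \in L)) => yL.
  + exists y'; split => //.
    move=> _.
    have sy : simplicial_in e S y by move: yL; rewrite inL => /andP[].
    apply: (simpl_edge sy aSS y'SS); first by rewrite esym.
      exact: Ly.
    by apply/eqP => E; rewrite E in aL; rewrite aL in y'L.
  + rewrite (Ny yL) in y'S cy'.
    by exists y; split.
- exists a; split => //.
  + by rewrite memD2 aL; move: aS; rewrite in_setD => /andP[-> ->].
  + have aS' : a \in S :\: L :\: X by rewrite memD2 aL; move: aS; rewrite in_setD => /andP[-> ->].
    case: (boolP (y \in L)) => yL.
    * case: (eqVneq a y') => [->//|ne].
      apply: connect_trans cy'; apply: connect1 => /=.
      rewrite aS' y'S !andbT.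
      have sy : simplicial_in e S y by move: yL; rewrite inL => /andP[].
      apply: (simpl_edge sy aSS y'SS); first by rewrite esym.
        exact: Ly. done.
    * rewrite (Ny yL) in y'S cy'.
      apply: connect_trans cy'; apply: connect1 => /=.
      by rewrite aS' y'S eay.
Qed.

Lemma evap_nil X S : is_evap e X S [::] -> S = X.
Proof. by move=> H; inversion H. Qed.

Lemma evap_cons X S L Ls : is_evap e X S (L :: Ls) -> S != X.
Proof. by move=> H; inversion H. Qed.

Lemma evap_sub X S Ls : is_evap e X S Ls -> X \subset S.
Proof.
elim=> [|S' Ls' _ _ IH]; first exact: subxx.
by apply: subset_trans IH _; apply: subsetDl.
Qed.

Lemma evap_last X S Ls : is_evap e X S Ls ->
  forall v, v \in last set0 Ls -> v \in S :\: X.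
Proof.
elim=> [|S' Ls' _ H IH] v; first by rewrite inE.
case: Ls' H IH => [|L' Ls'] H IH /=.
  by rewrite inE => /andP[].
move=> /IH; rewrite memD2 !in_setD => /and3P[-> _ ->]; done.
Qed.

Lemma hard X S Ls : is_evap e X S Ls -> S != X -> connected_in e (S :\: X) ->
  forall x c, x \in X -> c \in S :\: X -> e c x ->
  exists2 d, d \in last set0 Ls & e d x.
Proof.
elim=> [|S' Ls' hSX hev IH]; first by rewrite eqxx.
move=> _ [ne con] x c xX cS ecx.
set L := evap_layer e X S'.
have XS : X \subset S' :\: L by exact: evap_sub hev.
case: Ls' hev IH => [|L' Ls'] hev IH.
  exists c => //=.
  have E := evap_nil hev.
  apply/negPn/negP => cL.
  move: cS; rewrite inE => /andP[/negP cX cS]; apply: cX.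
  by rewrite -E inE cL.
have ne' := evap_cons hev.
have [b bS] : exists b, b \in S' :\: L :\: X.
  have: ~~ (S' :\: L \subset X).
    by apply/negP => sub; move/eqP: ne'; apply; apply/eqP; rewrite eqEsubset sub.
  case/subsetPn => b b1 b2; exists b; by rewrite inE b1 b2.
have con' : connected_in e (S' :\: L :\: X).
  split; first by apply/set0Pn; exists b.
  move=> a a' aS a'S.
  have := con a a'.
  have aS0 : a \in S' :\: X by move: aS; rewrite memD2 in_setD => /and3P[-> _ ->].
  have a'S0 : a' \in S' :\: X by move: a'S; rewrite memD2 in_setD => /and3P[-> _ ->].
  move=> /(_ aS0 a'S0) /connectP [p hp hl].
  rewrite hl in a'S.
  have [a1 [_ ca N1 N2]] := skip hp a'S.
  have aL : a \notin L by move: aS; rewrite memD2 => /and3P[_ + _].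
  by rewrite (N2 aL) -hl in ca.
have IH' := IH ne' con' x.
case: (boolP (c \in L)) => cL.
- have bS0 : b \in S' :\: X by move: bS; rewrite memD2 in_setD => /and3P[-> _ ->].
  have [p hp hl] := connectP (con c b cS bS0).
  rewrite hl in bS.
  have [c' [c'S _ E _]] := skip hp bS.
  have ecc' := E cL.
  have sc : simplicial_in e S' c by move: cL; rewrite inL => /andP[].
  have xS : x \in S' by move/subsetP: XS => /(_ x xX); rewrite inE => /andP[].
  have c'S0 : c' \in S' by move: c'S; rewrite memD2 => /and3P[].
  have c'x : c' != x.
    by apply/eqP => E'; move: c'S; rewrite E' memD2 xX.
  exact: IH' c' xX c'S (simpl_edge sc c'S0 xS ecc' ecx c'x).
- apply: (IH' c xX _ ecx).
  by rewrite memD2 cL; move: cS; rewrite in_setD => /andP[-> ->].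
Qed.

End Aux.

Theorem lemma5p8 (T : finType) (e : rel T) (X : {set T}) (Ls : seq {set T}) :
  simple_graph e -> chordal e ->
  is_clique e X -> X \proper [set: T] ->
  is_evap e X [set: T] Ls ->
  connected_in e ([set: T] :\: X) ->
  nbhd e ([set: T] :\: X) = nbhd e (last set0 Ls) :&: X.
Proof.
move=> [esym _] _ _ prop hev con.
have ne : [set: T] != X by apply/eqP => E; rewrite -E properxx in prop.
apply/setP => v; rewrite !inE.
apply/idP/idP.
- case/andP=> vX /existsP [c /andP[cS ecv]].
  have vX' : v \in X by move: vX; rewrite andbT negbK.
  have [d dL edv] := hard esym hev ne con vX' cS ecv.
  rewrite vX' andbT; apply/andP; split.
    apply/negP => vL; have := evap_last hev vL; by rewrite !inE vX'.
  by apply/existsP; exists d; rewrite dL.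
- case/andP=> /andP[_ /existsP [d /andP[dL edv]]] vX.
  rewrite vX /=; apply/existsP; exists d.
  by rewrite edv andbT; have := evap_last hev dL.
Qed.
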